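(* For no $\alpha\in\mathbb R$ is a right circular cylinder in $\mathbb R^3$ (of any radius, any axis) an $\alpha$-stationary surface.
   Context: Let $\Sigma$ be a connected oriented surface immersed in $\mathbb R^3\setminus\{0\}$ with unit normal $\nu$ and mean curvature $H$ (sum of the principal curvatures). For $\alpha\in\mathbb R$, $\Sigma$ is called $\alpha$-stationary if $H(p)=\alpha\,\frac{\langle\nu(p),p\rangle}{|p|^2}$ for all $p\in\Sigma$. *)

(* Defs.v *)
From Stdlib Require Import Reals.
From Coquelicot Require Import Coquelicot.
Open Scope R_scope.

Definition R3 : Type := (R * R * R)%type.
Definition vx (p : R3) : R := fst (fst p).
Definition vy (p : R3) : R := snd (fst p).
Definition vz (p : R3) : R := snd p.
Definition mk3 (a b c : R) : R3 := (a, b, c).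
Definition vadd (p q : R3) : R3 := mk3 (vx p + vx q) (vy p + vy q) (vz p + vz q).
Definition vscal (k : R) (p : R3) : R3 := mk3 (k * vx p) (k * vy p) (k * vz p).
Definition dot (p q : R3) : R := vx p * vx q + vy p * vy q + vz p * vz q.
Definition norm2 (p : R3) : R := dot p p.
Definition origin : R3 := mk3 0 0 0.

Definition pd1 (X : R -> R -> R3) (a b : R) : R3 :=
  mk3 (Derive (fun s => vx (X s b)) a)
      (Derive (fun s => vy (X s b)) a)
      (Derive (fun s => vz (X s b)) a).
Definition pd2 (X : R -> R -> R3) (a b : R) : R3 :=
  mk3 (Derive (fun s => vx (X a s)) b)
      (Derive (fun s => vy (X a s)) b)
      (Derive (fun s => vz (X a s)) b).

Definition unit_normal_field (X : R -> R -> R3) (N : R -> R -> R3) : Prop :=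
  (forall a b, norm2 (N a b) = 1 /\ dot (N a b) (pd1 X a b) = 0
                                 /\ dot (N a b) (pd2 X a b) = 0)
  /\ (forall a b, continuous (fun p : R * R => N (fst p) (snd p)) (a, b)).

(* Mean curvature (sum of principal curvatures) w.r.t. N, via the first
   fundamental form (E,F,G) and second fundamental form (L,M,Nn) with
   L = <X_aa, N> etc.:  H = (E Nn - 2 F M + G L) / (E G - F^2). *)
Definition mean_curv (X N : R -> R -> R3) (a b : R) : R :=
  let Xa := pd1 X a b in
  let Xb := pd2 X a b in
  let E := dot Xa Xa in
  let F := dot Xa Xb in
  let G := dot Xb Xb in
  let L := dot (pd1 (pd1 X) a b) (N a b) in
  let M := dot (pd2 (pd1 X) a b) (N a b) in
  let Nn := dot (pd2 (pd2 X) a b) (N a b) in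
  (E * Nn - 2 * F * M + G * L) / (E * G - F * F).

Definition alpha_stationary (X N : R -> R -> R3) (alpha : R) : Prop :=
  forall a b, X a b <> origin ->
    mean_curv X N a b = alpha * dot (N a b) (X a b) / norm2 (X a b).

Definition orthonormal (u v e : R3) : Prop :=
  norm2 u = 1 /\ norm2 v = 1 /\ norm2 e = 1 /\
  dot u v = 0 /\ dot u e = 0 /\ dot v e = 0.

Definition cylinder (c u v e : R3) (r : R) : R -> R -> R3 :=
  fun th t => vadd c (vadd (vscal (r * cos th) u)
                          (vadd (vscal (r * sin th) v) (vscal t e))).

(* Main.v *)
Require Import Defs.
From Stdlib Require Import Reals Lra Psatz FunctionalExtensionality.
From Coquelicot Require Import Coquelicot.
Open Scope R_scope.

Section S.
Variables (c u v e : R3) (r : R).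
Definition Xc := cylinder c u v e r.
Definition P1 := fun th t : R => mk3 (r*(-sin th)*vx u + r*cos th*vx v)
   (r*(-sin th)*vy u + r*cos th*vy v) (r*(-sin th)*vz u + r*cos th*vz v).
Definition P2 := fun th t : R => e.
Definition P11 := fun th t : R => mk3 (r*(-cos th)*vx u + r*(-sin th)*vx v)
   (r*(-cos th)*vy u + r*(-sin th)*vy v) (r*(-cos th)*vz u + r*(-sin th)*vz v).

Lemma pd1_cyl : pd1 Xc = P1.
Proof.
apply functional_extensionality => th; apply functional_extensionality => t.
unfold pd1, P1, Xc, cylinder, vadd, vscal, mk3, vx, vy, vz; simpl.
f_equal; [f_equal|]; apply is_derive_unique; auto_derive; auto; ring.
Qed.
Lemma pd2_cyl : pd2 Xc = P2.
Proof.
apply functional_extensionality => th; apply functional_extensionality => t.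
unfold pd2, P2, Xc, cylinder, vadd, vscal, mk3, vx, vy, vz; simpl.
destruct e as [[e1 e2] e3]; simpl.
f_equal; [f_equal|]; apply is_derive_unique; auto_derive; auto; ring.
Qed.
Lemma pd11_cyl : pd1 P1 = P11.
Proof.
apply functional_extensionality => th; apply functional_extensionality => t.
unfold pd1, P1, P11, mk3, vx, vy, vz; simpl.
f_equal; [f_equal|]; apply is_derive_unique; auto_derive; auto; ring.
Qed.
Lemma pd21_cyl : pd2 P1 = fun _ _ => origin.
Proof.
apply functional_extensionality => th; apply functional_extensionality => t.
unfold pd2, P1, origin, mk3, vx, vy, vz; simpl.
f_equal; [f_equal|]; apply is_derive_unique; auto_derive; auto; ring.
Qed.
Lemma pd22_cyl : pd2 P2 = fun _ _ => origin.
Proof.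
apply functional_extensionality => th; apply functional_extensionality => t.
unfold pd2, P2, origin, mk3, vx, vy, vz; simpl.
f_equal; [f_equal|]; apply is_derive_unique; auto_derive; auto; ring.
Qed.
End S.
Lemma decomp (u v e N : R3) : orthonormal u v e -> norm2 N = 1 -> dot N v = 0 -> dot N e = 0 ->
  N = vscal (dot N u) u /\ dot N u * dot N u = 1.
Proof.
destruct u as [[u1 u2] u3], v as [[v1 v2] v3], e as [[e1 e2] e3], N as [[n1 n2] n3].
unfold orthonormal, norm2, dot, vscal, mk3, vx, vy, vz; simpl.
intros (Hu & Hv & He & Huv & Hue & Hve) HN HNv HNe.
set (Dt := u1*(v2*e3 - v3*e2) - u2*(v1*e3-v3*e1) + u3*(v1*e2-v2*e1)).
set (a := n1*u1+n2*u2+n3*u3).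
assert (HD : Dt*Dt = 1).
{ assert (Dt*Dt = (u1*u1+u2*u2+u3*u3)*((v1*v1+v2*v2+v3*v3)*(e1*e1+e2*e2+e3*e3) - (v1*e1+v2*e2+v3*e3)^2)
   - (u1*v1+u2*v2+u3*v3)*((u1*v1+u2*v2+u3*v3)*(e1*e1+e2*e2+e3*e3) - (v1*e1+v2*e2+v3*e3)*(u1*e1+u2*e2+u3*e3))
   + (u1*e1+u2*e2+u3*e3)*((u1*v1+u2*v2+u3*v3)*(v1*e1+v2*e2+v3*e3) - (v1*v1+v2*v2+v3*v3)*(u1*e1+u2*e2+u3*e3))) by (unfold Dt; ring).
  rewrite H, Hu, Hv, He, Huv, Hue, Hve; ring. }
assert (E1 : forall x1 x2 x3, Dt*x1 = (x1*u1+x2*u2+x3*u3)*(v2*e3-v3*e2) + (x1*v1+x2*v2+x3*v3)*(e2*u3-e3*u2) + (x1*e1+x2*e2+x3*e3)*(u2*v3-u3*v2)) by (intros; unfold Dt; ring).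
assert (E2 : forall x1 x2 x3, Dt*x2 = (x1*u1+x2*u2+x3*u3)*(v3*e1-v1*e3) + (x1*v1+x2*v2+x3*v3)*(e3*u1-e1*u3) + (x1*e1+x2*e2+x3*e3)*(u3*v1-u1*v3)) by (intros; unfold Dt; ring).
assert (E3 : forall x1 x2 x3, Dt*x3 = (x1*u1+x2*u2+x3*u3)*(v1*e2-v2*e1) + (x1*v1+x2*v2+x3*v3)*(e1*u2-e2*u1) + (x1*e1+x2*e2+x3*e3)*(u1*v2-u2*v1)) by (intros; unfold Dt; ring).
assert (Hn1 : n1 = a*u1).
{ pose proof (E1 n1 n2 n3) as A; pose proof (E1 u1 u2 u3) as B.
  fold a in A; rewrite HNv, HNe in A. rewrite Hu, Huv, Hue in B.
  apply Rmult_eq_reg_l with Dt; [|intro; rewrite H in HD; lra]. rewrite A. 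
  replace (Dt*(a*u1)) with (a*(Dt*u1)) by ring. rewrite B; ring. }
assert (Hn2 : n2 = a*u2).
{ pose proof (E2 n1 n2 n3) as A; pose proof (E2 u1 u2 u3) as B.
  fold a in A; rewrite HNv, HNe in A. rewrite Hu, Huv, Hue in B.
  apply Rmult_eq_reg_l with Dt; [|intro; rewrite H in HD; lra]. rewrite A. 
  replace (Dt*(a*u2)) with (a*(Dt*u2)) by ring. rewrite B; ring. }
assert (Hn3 : n3 = a*u3).
{ pose proof (E3 n1 n2 n3) as A; pose proof (E3 u1 u2 u3) as B.
  fold a in A; rewrite HNv, HNe in A. rewrite Hu, Huv, Hue in B.
  apply Rmult_eq_reg_l with Dt; [|intro; rewrite H in HD; lra]. rewrite A. 
  replace (Dt*(a*u3)) with (a*(Dt*u3)) by ring. rewrite B; ring. }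
split.
- rewrite Hn1, Hn2, Hn3 at 1. fold a. reflexivity.
- rewrite <- HN, Hn1, Hn2, Hn3. fold a. 
  transitivity (a*a*(u1*u1+u2*u2+u3*u3)); [rewrite Hu; ring| ring].
Qed.
Lemma dot_sl k p q : dot (vscal k p) q = k * dot p q.
Proof. destruct p as [[? ?] ?], q as [[? ?] ?]; unfold dot, vscal, mk3, vx, vy, vz; simpl; ring. Qed.
Lemma dot_sr k p q : dot p (vscal k q) = k * dot p q.
Proof. destruct p as [[? ?] ?], q as [[? ?] ?]; unfold dot, vscal, mk3, vx, vy, vz; simpl; ring. Qed.
Lemma dot_al p q s : dot (vadd p q) s = dot p s + dot q s.
Proof. destruct p as [[? ?] ?], q as [[? ?] ?], s as [[? ?] ?]; unfold dot, vadd, mk3, vx, vy, vz; simpl; ring. Qed.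
Lemma dot_ar p q s : dot s (vadd p q) = dot s p + dot s q.
Proof. destruct p as [[? ?] ?], q as [[? ?] ?], s as [[? ?] ?]; unfold dot, vadd, mk3, vx, vy, vz; simpl; ring. Qed.
Lemma dot_C p q : dot p q = dot q p.
Proof. destruct p as [[? ?] ?], q as [[? ?] ?]; unfold dot; simpl; ring. Qed.
Lemma dot_0 p : dot p origin = 0.
Proof. destruct p as [[? ?] ?]; unfold dot, origin, mk3, vx, vy, vz; simpl; ring. Qed.
Lemma dot_0l p : dot origin p = 0.
Proof. destruct p as [[? ?] ?]; unfold dot, origin, mk3, vx, vy, vz; simpl; ring. Qed.
Lemma norm2_ge0 p : 0 <= norm2 p.
Proof. destruct p as [[? ?] ?]; unfold norm2, dot, vx, vy, vz; simpl; nra. Qed.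
Lemma norm2_nz p : 0 < norm2 p -> p <> origin.
Proof. intros H E; subst; unfold norm2, dot, origin, mk3, vx, vy, vz in H; simpl in H; lra. Qed.

Lemma cyl0 c u v e r t : cylinder c u v e r 0 t = vadd (vadd c (vscal r u)) (vscal t e).
Proof.
destruct c as [[? ?] ?], u as [[? ?] ?], v as [[? ?] ?], e as [[? ?] ?].
unfold cylinder, vadd, vscal, mk3, vx, vy, vz; simpl; rewrite cos_0, sin_0.
f_equal; [f_equal|]; ring.
Qed.
Lemma P1_0 u v r t : P1 u v r 0 t = vscal r v.
Proof.
destruct u as [[? ?] ?], v as [[? ?] ?].
unfold P1, vscal, mk3, vx, vy, vz; simpl; rewrite cos_0, sin_0.
f_equal; [f_equal|]; ring.
Qed.
Lemma P11_0 u v r t : P11 u v r 0 t = vscal (-r) u.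
Proof.
destruct u as [[? ?] ?], v as [[? ?] ?].
unfold P11, vscal, mk3, vx, vy, vz; simpl; rewrite cos_0, sin_0.
f_equal; [f_equal|]; ring.
Qed.

Theorem mainTheorem4 :
  forall (alpha r : R) (c u v e : R3) (N : R -> R -> R3),
    0 < r -> orthonormal u v e ->
    unit_normal_field (cylinder c u v e r) N ->
    ~ alpha_stationary (cylinder c u v e r) N alpha.
Proof.
intros alpha r c u v e N Hr Ho [HN _] Hst.
pose proof Ho as (Hu & Hv & He & Huv & Hue & Hve).
set (w := vadd c (vscal r u)).
set (B := dot w e).
assert (HQ : forall t, norm2 (vadd w (vscal t e)) = norm2 w + 2*t*B + t*t).
{ intro t; unfold norm2, B; rewrite !dot_al, !dot_ar, !dot_sl, !dot_sr.
  fold (norm2 e); rewrite He, (dot_C e w); ring. }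
assert (Hpos : 0 <= norm2 w - B*B).
{ pose proof (norm2_ge0 (vadd w (vscal (-B) e))) as H; rewrite HQ in H; nra. }
assert (Key : forall t, 0 < norm2 (vadd w (vscal t e)) ->
   norm2 (vadd w (vscal t e)) = - alpha * r * dot u w).
{ intros t Ht.
  pose proof (Hst 0 t) as Hs. rewrite cyl0 in Hs. fold w in Hs.
  specialize (Hs (norm2_nz _ Ht)).
  destruct (HN 0 t) as (HN1 & HN2 & HN3).
  change (cylinder c u v e r) with (Xc c u v e r) in HN2, HN3, Hs.
  rewrite pd1_cyl, P1_0, dot_sr in HN2.
  rewrite pd2_cyl in HN3; unfold P2 in HN3.
  assert (HNv : dot (N 0 t) v = 0).
  { apply Rmult_eq_reg_l with r; [|lra]. lra. }
  destruct (decomp u v e (N 0 t) Ho HN1 HNv HN3) as [HNe Ha].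
  set (a := dot (N 0 t) u) in *.
  unfold mean_curv in Hs.
  repeat rewrite pd1_cyl in Hs. repeat rewrite pd2_cyl in Hs.
  repeat rewrite pd11_cyl in Hs. repeat rewrite pd21_cyl in Hs. repeat rewrite pd22_cyl in Hs.
  unfold P2 in Hs. rewrite P1_0, P11_0, HNe in Hs.
  rewrite !dot_sl, !dot_sr, !dot_0l, dot_ar, dot_sr in Hs.
  change (dot v v) with (norm2 v) in Hs. change (dot e e) with (norm2 e) in Hs.
  change (dot u u) with (norm2 u) in Hs.
  rewrite Hve, Hu, Hv, He, Hue in Hs.
  set (Q := norm2 (vadd w (vscal t e))) in *.
  assert (Hs' : - a / r = alpha * (a * (dot u w + t * 0)) / Q).
  { rewrite <- Hs. field. lra. }
  clear Hs.
  assert (Hr0 : r <> 0) by lra. assert (HQ0 : Q <> 0) by lra.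
  assert (H1 : -a*Q = alpha*(a*dot u w)*r).
  { replace (-a*Q) with (-a/r*(r*Q)) by (field; auto). rewrite Hs'. field; auto. }
  replace Q with (a*a*Q) by (rewrite Ha; ring).
  replace (a*a*Q) with (-a*(-a*Q)) by ring. rewrite H1.
  replace (- a * (alpha * (a * dot u w) * r)) with (-(a*a)*alpha*r*dot u w) by ring.
  rewrite Ha; ring. }
pose proof (Key (-B+1)) as K1. pose proof (Key (-B+2)) as K2.
rewrite HQ in K1, K2.
assert (E1 : norm2 w + 2*(-B+1)*B + (-B+1)*(-B+1) = norm2 w - B*B + 1) by ring.
assert (E2 : norm2 w + 2*(-B+2)*B + (-B+2)*(-B+2) = norm2 w - B*B + 4) by ring.
rewrite E1 in K1. rewrite E2 in K2.
lra.
Qed.
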